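(* Call a nonnegative integer $t$ totally balanced if its binary expansion (with the convention that $0$ has the empty expansion) has even length $2k$ for some $k \geq 0$, contains exactly $k$ ones and $k$ zeros, and, reading from the most significant bit, every prefix contains no more zeros than ones. For a nonnegative integer $t = \sum_{j \geq 0} e_j 2^j$ with $e_j \in \{0,1\}$, let $v_t = \sum_{j \geq 0} e_j 2^{-j-1}$ (the base-2 van der Corput value). Write each $v_t$, for $t$ totally balanced, as a fraction in lowest terms. Then every such denominator is a power of $4$, and for each $k \geq 0$ the denominator $4^k$ occurs for exactly $$C_k = \frac{1}{k+1}\binom{2k}{k}$$ totally balanced integers $t$ (namely those whose binary expansion has length $2k$).
   Context: $C_k$ denotes the $k$-th Catalan number. *)

(* Defs.v *)
From mathcomp Require Import all_boot all_order all_algebra.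
Set Implicit Arguments. Unset Strict Implicit. Unset Printing Implicit Defensive.
Import Order.TTheory GRing.Theory Num.Theory.

Definition binlen (n : nat) : nat := if n == 0%N then 0%N else (trunc_log 2 n).+1.

Definition bit (n j : nat) : bool := odd (n %/ 2 ^ j).

Definition binexp (n : nat) : seq bool :=
  [seq bit n (binlen n - 1 - i) | i <- iota 0 (binlen n)].

Definition totally_balanced (t : nat) : Prop :=
  exists k : nat,
    [/\ size (binexp t) = k.*2,
        count id (binexp t) = k,
        count negb (binexp t) = k &
        forall i : nat, count negb (take i (binexp t)) <= count id (take i (binexp t))].

Definition vdc (t : nat) : rat :=
  (\sum_(j < binlen t) (bit t j)%:R / (2 ^ j.+1)%N%:R)%R.

Definition catalan (k : nat) : nat := 'C(k.*2, k) %/ k.+1.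

(* Main.v *)
Require Import Defs.
From mathcomp Require Import all_boot all_order all_algebra.
From mathcomp Require Import zify ring lra.
Import Order.TTheory GRing.Theory Num.Theory.


Definition okp (s : seq bool) : Prop :=
  forall i : nat, count negb (take i s) <= count id (take i s).

Lemma okp_nil : okp [::].
Proof. by move=> i. Qed.

Lemma okp_rcons s x : okp (rcons s x) <->
  okp s /\ count negb (rcons s x) <= count id (rcons s x).
Proof.
split.
- move=> H; split; last by have := H (size s).+1; rewrite take_oversize // size_rcons.
  move=> i; case: (leqP i (size s)) => hi.
    have := H i; rewrite -cats1 take_cat; case: ltnP => // hi2.
    have -> : i = size s by apply/eqP; rewrite eqn_leq hi hi2.
    by rewrite subnn take_size cats0.
  rewrite take_oversize ?(ltnW hi) //; have := H (size s).
  by rewrite -cats1 take_cat ltnn subnn /= cats0.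
- move=> [H1 H2] i; rewrite -cats1 take_cat; case: ltnP => hi; first exact: H1.
  case: (i - size s) => [|j] /=; first by rewrite cats0; have := H1 (size s); rewrite take_size.
  by rewrite ?take0 cats1.
Qed.

Lemma count_negb s : count negb s = size s - count id s.
Proof. by rewrite -(count_predC id s) addKn. Qed.

Fixpoint dyck (a : nat) : nat -> seq (seq bool) :=
  fix dy (b : nat) :=
   match b with
   | 0 => [:: nseq a true]
   | b'.+1 => if b'.+1 <= a then
        (if a is a'.+1 then [seq rcons s true | s <- dyck a' b'.+1] else [::])
        ++ [seq rcons s false | s <- dy b']
      else [::]
   end.

Lemma mem_rcons_map (L : seq (seq bool)) s x y :
  (rcons s x \in [seq rcons u y | u <- L]) = (x == y) && (s \in L).
Proof.
apply/mapP/andP => [[u hu /eqP]|[/eqP -> h]]; last by exists s.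
by rewrite eqseq_rcons => /andP[/eqP -> /eqP ->].
Qed.

Lemma cnt_nseq_id n : count id (nseq n true) = n.
Proof. by elim: n => //= n ->. Qed.
Lemma cnt_nseq_negb n : count negb (nseq n true) = 0.
Proof. by elim: n. Qed.

Lemma okp_nseq a : okp (nseq a true).
Proof.
move=> i; suff -> : count negb (take i (nseq a true)) = 0 by [].
elim: a i => [|a IH] [|i] //=; exact: IH.
Qed.

Lemma cnt_rcons (p : pred bool) (s : seq bool) x : count p (rcons s x) = count p s + p x.
Proof. by rewrite -cats1 count_cat /= addn0. Qed.

Lemma dyck0 a : dyck a 0 = [:: nseq a true].
Proof. by case: a. Qed.

Lemma dyckS a b : dyck a b.+1 = if b.+1 <= a then
        (if a is a'.+1 then [seq rcons s true | s <- dyck a' b.+1] else [::])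
        ++ [seq rcons s false | s <- dyck a b]
      else [::].
Proof. by case: a. Qed.

Lemma dyck_nil a b : ([::] \in dyck a b) = (a == 0) && (b == 0).
Proof.
case: b => [|b] /=; first by case: a.
rewrite andbF; case: a => [|a] /=; first by [].
case: ifP => // _; rewrite mem_cat; apply/negbTE/norP; split.
  by apply/mapP => -[u _]; case: u.
by apply/mapP => -[u _]; case: u.
Qed.

Lemma dyckP s a b : s \in dyck a b <->
  [/\ count id s = a, count negb s = b & okp s].
Proof.
elim/last_ind: s a b => [|s x IH] a b.
  rewrite dyck_nil; split; first by case/andP => /eqP -> /eqP ->; split => //; exact: okp_nil.
  by case => <- <- _.
case: b => [|b].
  rewrite dyck0 inE; split.
    move/eqP => ->; rewrite cnt_nseq_id cnt_nseq_negb; split => //.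
    exact: okp_nseq.
  move=> [ha hb _]; apply/eqP.
  have : all (pred1 true) (rcons s x).
    rewrite all_count (@eq_count _ _ id); last by move=> y /=; rewrite eqb_id.
    rewrite count_negb in hb; move/eqP: hb; rewrite subn_eq0 => hb; rewrite eqn_leq count_size; exact: hb.
  move=> /all_pred1P; set n := size _ => E; rewrite -ha E.
  by rewrite cnt_nseq_id.
rewrite dyckS; case: ifP => hba.
  rewrite mem_cat; split.
    case/orP.
      case: a hba => [//|a] hba.
      move/mapP => [u hu /eqP]; rewrite eqseq_rcons => /andP[/eqP E /eqP ->].
      rewrite -E in hu; move/IH: hu => [ca cb ok].
      rewrite !cnt_rcons /= ca cb; split; [lia|lia|apply/okp_rcons; rewrite !cnt_rcons /= ca cb; split => //; lia].
    move/mapP => [u hu /eqP]; rewrite eqseq_rcons => /andP[/eqP E /eqP ->].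
    rewrite -E in hu; move/IH: hu => [ca cb ok].
    rewrite !cnt_rcons /= ca cb; split; [lia|lia|apply/okp_rcons; rewrite !cnt_rcons /= ca cb; split => //; lia].
  move=> [ca cb /okp_rcons [ok _]]; move: ca cb; rewrite !cnt_rcons.
  case: x => /= ca cb; apply/orP.
    case: a hba ca => [|a] hba ca; first by rewrite addn1 in ca.
    left; apply/mapP; exists s => //; apply/IH; split => //; lia.
  right; apply/mapP; exists s => //; apply/IH; split => //; lia.
split => //; case=> ha hb /okp_rcons [_]; move: ha hb; rewrite !cnt_rcons.
case: x => /= ha hb; lia.
Qed.

Definition cc a b := if b is b'.+1 then 'C(a + b, b') else 0.

Lemma size_dyck a b : b <= a.+1 -> size (dyck a b) + cc a b = 'C(a + b, b).
Proof.
elim: a b => [|a IHa] b.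
  by case: b => [|[|b]].
elim: b => [|b IHb] hb; first by rewrite dyck0 /= bin0.
rewrite dyckS; case: ifP => hba.
  rewrite size_cat !size_map.
  have h1 := IHa b.+1 hba.
  have h2 := IHb (ltnW hb).
  have P : 'C((a + b).+2, b) = 'C((a + b).+1, b) + cc a.+1 b.
    by case: b {IHb hb hba h1 h2} => [|b] //=; rewrite !bin0 // addSn addnS.
  have Q := binS (a + b).+1 b.
  move: h1 h2 P Q; rewrite /cc !addSn !addnS /=; lia.
have -> : b = a.+1 by apply/eqP; rewrite eqn_leq -ltnS hb leqNgt hba.
rewrite /cc /= -(bin_sub (m := a.+1)); first by congr binomial; lia.
lia.
Qed.

Lemma size_dyck_cat k : size (dyck k k) = catalan k.
Proof.
have := @size_dyck k k (leqnSn k); rewrite /catalan -addnn.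
case: k => [|k]; first by rewrite dyck0.
have := mul_bin_left (k.+1 + k.+1) k.
move=> M E.
have H : 'C(k.+1 + k.+1, k.+1) = size (dyck k.+1 k.+1) * k.+2.
  move: M E; rewrite /cc; set C := 'C(_, k.+1); set D := 'C(_, k); set S := size _.
  have -> : k.+1 + k.+1 - k = k.+2 by lia.
  nia.
by rewrite H mulnK.
Qed.

Lemma binexp0 : binexp 0 = [::].
Proof. by []. Qed.

Lemma size_binexp t : size (binexp t) = binlen t.
Proof. by rewrite size_map size_iota. Qed.

Lemma binlen_half n : 0 < n -> binlen n = (binlen n./2).+1.
Proof.
rewrite /binlen; case: n => [//|[|n]] _ //=.
rewrite trunc_log2S //.
Qed.

Lemma bitS n j : bit n j.+1 = bit n./2 j.
Proof. by rewrite /bit expnS divnMA divn2. Qed.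

Lemma binexp_half n : 0 < n -> binexp n = rcons (binexp n./2) (odd n).
Proof.
move=> n0; rewrite /binexp binlen_half // -addn1 iotaD map_cat /= cats1 add0n.
congr rcons; last by rewrite addn1 subSS subn0 subnn /bit expn0 divn1.
apply/eq_in_map => i; rewrite mem_iota add0n => /andP[_ hi].
have -> : binlen n./2 + 1 - 1 - i = (binlen n./2 - 1 - i).+1 by lia.
by rewrite bitS.
Qed.

Definition num (w : seq bool) : nat := foldl (fun acc (x : bool) => acc.*2 + x) 0 w.

Lemma num_rcons w x : num (rcons w x) = (num w).*2 + x.
Proof. by rewrite /num foldl_rcons. Qed.

Lemma num_binexp t : num (binexp t) = t.
Proof.
elim: t {-2}t (leqnn t) => [|m IH] t ht; first by case: t ht.
case: t ht => [//|t] ht.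
rewrite binexp_half // num_rcons IH; last by rewrite -divn2; apply: leq_trans (ltn_Pdiv _ _) ht.
by rewrite addnC odd_double_half.
Qed.

Lemma binexp_num w : okp w -> binexp (num w) = w.
Proof.
elim/last_ind: w => [//|w x IH] /okp_rcons [ok hx].
have Hw := IH ok.
case: (posnP (num w)) => hw.
  have w0 : w = [::] by rewrite -Hw hw.
  subst w; case: x hx => //= _.
rewrite num_rcons binexp_half; last by rewrite addn_gt0 double_gt0 hw.
by rewrite addnC half_bit_double Hw oddD odd_double /=; case: x {hx}.
Qed.

Local Open Scope ring_scope.

Lemma vdc0 : vdc 0 = 0.
Proof. by rewrite /vdc /binlen /= big_ord0. Qed.

Lemma vdc_half t : (0 < t)%N -> vdc t = ((odd t)%:R + vdc t./2) / 2.
Proof.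
move=> t0; rewrite /vdc binlen_half // big_ord_recl /= /bit expn0 divn1 expn1.
rewrite mulrDl; congr (_ + _); rewrite mulr_suml; apply: eq_bigr => i _.
rewrite /bump /= add1n -/(bit t i.+1) bitS /bit.
rewrite (expnS 2 i.+1) natrM; field.
by rewrite pnatr_eq0 expn_eq0.
Qed.

Lemma binlen_gt0 t : (0 < t)%N -> (0 < binlen t)%N.
Proof. by move=> t0; rewrite binlen_half. Qed.

Lemma vdc_frac t : (0 < t)%N ->
  exists N : nat, odd N /\ vdc t = N%:R / (2 ^ binlen t)%N%:R.
Proof.
elim: t {-2}t (leqnn t) => [|m IH] t ht t0; first by case: t ht t0.
rewrite vdc_half // binlen_half //.
case: (posnP t./2) => h2.
  exists 1%N; split => //; rewrite h2 vdc0 /binlen /= expn1.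
  have : t = 1%N by move: h2; case: t t0 {ht} => [|[|t]].
  by move=> ->.
have [|N [oN ->]] := IH t./2 _ h2.
  by rewrite -divn2; apply: leq_trans (ltn_Pdiv _ _) ht.
exists ((odd t) * 2 ^ binlen t./2 + N)%N; split.
  rewrite oddD oddM oN oddX; by rewrite -[binlen _ == 0%N]negbK -lt0n binlen_gt0 // andbF.
rewrite natrD natrM expnS natrM; field.
by rewrite pnatr_eq0 expn_eq0.
Qed.

Lemma vdc_den t : denq (vdc t) = (2 ^ binlen t)%N%:Z.
Proof.
case: (posnP t) => [->|t0]; first by rewrite vdc0 /binlen /=.
have [N [oN ->]] := @vdc_frac _ t0.
have := @coprimeq_den N%:Z (2 ^ binlen t)%N%:Z.
rewrite !pmulrn /= => ->; last by rewrite coprimeXr // coprimen2.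
by rewrite eqz_nat expn_eq0 /=.
Qed.

Lemma pow4 k : (2 ^ k.*2 = 4 ^ k)%N.
Proof. by rewrite -mul2n expnM. Qed.

Lemma den_iff t k : denq (vdc t) = ((4 ^ k)%N)%:Z <-> size (binexp t) = k.*2.
Proof.
rewrite vdc_den size_binexp -pow4; split => [/eqP|->//].
by rewrite eqz_nat eqn_exp2l // => /eqP.
Qed.

Lemma size_counts (s : seq bool) : size s = (count id s + count negb s)%N.
Proof. by rewrite count_negb subnKC // count_size. Qed.

Lemma uniq_dyck a b : uniq (dyck a b).
Proof.
elim: a b => [|a IHa] b.
  by case: b => [|b] //=.
elim: b => [|b IHb]; first by rewrite dyck0.
rewrite dyckS; case: ifP => // _; rewrite cat_uniq; apply/and3P; split.
- have inj : forall x : bool, injective (fun u : seq bool => rcons u x).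
    by move=> x u v /eqP; rewrite eqseq_rcons eqxx andbT => /eqP.
  by rewrite (map_inj_uniq (inj true)) IHa.
- by apply/hasPn => y /mapP [u _ ->]; rewrite mem_rcons_map.
- have inj : forall x : bool, injective (fun u : seq bool => rcons u x).
    by move=> x u v /eqP; rewrite eqseq_rcons eqxx andbT => /eqP.
  by rewrite (map_inj_uniq (inj false)).
Qed.

Lemma tb_dyck t k : (totally_balanced t /\ size (binexp t) = k.*2) <->
  binexp t \in dyck k k.
Proof.
split.
  move=> [tb hs]; case: tb => k' [h1 h2 h3 h4].
  have e : k' = k by move: h1; rewrite hs; lia.
  apply/dyckP; split; [by rewrite h2 e|by rewrite h3 e|exact: h4].
move/dyckP => [h2 h3 h4]; split; last by rewrite size_counts h2 h3 addnn.
by exists k; split => //; rewrite size_counts h2 h3 addnn.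
Qed.

Lemma mem_num t k : t \in [seq num w | w <- dyck k k] <-> binexp t \in dyck k k.
Proof.
split.
  move/mapP => [w hw ->]; move/dyckP: (hw) => [_ _ ok]; by rewrite binexp_num.
by move=> h; apply/mapP; exists (binexp t) => //; rewrite num_binexp.
Qed.

Theorem proposition1 :
  (forall t : nat, totally_balanced t ->
     exists k : nat, denq (vdc t) = ((4 ^ k)%N)%:Z) /\
  (forall k : nat,
     exists s : seq nat,
       [/\ uniq s,
           size s = catalan k,
           (forall t : nat, t \in s <->
              (totally_balanced t /\ denq (vdc t) = ((4 ^ k)%N)%:Z)) &
           (forall t : nat, totally_balanced t ->
              (denq (vdc t) = ((4 ^ k)%N)%:Z <-> size (binexp t) = k.*2))]).
Proof.
split.
  move=> t [k [h1 _ _ _]]; exists k; exact/den_iff.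
move=> k; exists [seq num w | w <- dyck k k]; split.
- rewrite map_inj_in_uniq ?uniq_dyck //.
  move=> x y hx hy E.
  move/dyckP: hx => [_ _ ox]; move/dyckP: hy => [_ _ oy].
  by rewrite -(@binexp_num _ ox) -(@binexp_num _ oy) E.
- by rewrite size_map size_dyck_cat.
- move=> t; rewrite mem_num -tb_dyck; split => -[h1 h2]; split => //; exact/den_iff.
- by move=> t _; exact: den_iff.
Qed.
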